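(* Let $L'$ and $L''$ be languages over $\Sigma$ that satisfy the partial order condition. Then $L=L'\cap L''$ also satisfies the partial order condition.
   Context: A DFA $(Q,\Sigma,\delta,q_0,F)$ (with $\delta$ extended to strings) satisfies the partial order condition if there do not exist two distinguishable states $q_1,q_2\in Q$ and strings $x,y\in\Sigma^+$ with $\delta(q_1,x)=\delta(q_2,x)=q_2$ and $\delta(q_2,y)=q_1$; here $q_1,q_2$ are distinguishable if there is $z\in\Sigma^*$ such that exactly one of $\delta(q_1,z),\delta(q_2,z)$ lies in $F$. A (regular) language satisfies the partial order condition if its minimal DFA does. *)

(* Defs.v *)
From HB Require Import structures.
From mathcomp Require Import all_boot.
Set Implicit Arguments. Unset Strict Implicit. Unset Printing Implicit Defensive.

Definition language (Sigma : finType) := seq Sigma -> Prop.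

Record dfa (Sigma : finType) := Dfa {
  state : finType;
  delta : state -> Sigma -> state;
  start : state;
  final : {set state}
}.

Arguments start {Sigma} d.
Arguments final {Sigma} d.
Arguments delta {Sigma} d.
Definition delta_star {Sigma : finType} (A : dfa Sigma) (q : state A) (w : seq Sigma)
  : state A := foldl (delta A) q w.
Arguments delta_star {Sigma} A q w.

Definition accepts (Sigma : finType) (A : dfa Sigma) (w : seq Sigma) : Prop :=
  delta_star A (start A) w \in final A.

Definition recognizes (Sigma : finType) (A : dfa Sigma) (L : language Sigma) : Prop :=
  forall w, L w <-> accepts A w.

Definition regular (Sigma : finType) (L : language Sigma) : Prop :=
  exists A : dfa Sigma, recognizes A L.

Definition minimal_dfa (Sigma : finType) (A : dfa Sigma) (L : language Sigma) : Prop :=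
  recognizes A L /\
  forall B : dfa Sigma, recognizes B L -> #|state A| <= #|state B|.

Definition distinguishable {Sigma : finType} (A : dfa Sigma) (q1 q2 : state A) : Prop :=
  exists z : seq Sigma,
    (delta_star A q1 z \in final A) != (delta_star A q2 z \in final A).
Arguments distinguishable {Sigma} A q1 q2.

Definition dfa_poc (Sigma : finType) (A : dfa Sigma) : Prop :=
  ~ exists (q1 q2 : state A) (x y : seq Sigma),
      distinguishable A q1 q2 /\ x != [::] /\ y != [::] /\
      delta_star A q1 x = q2 /\ delta_star A q2 x = q2 /\
      delta_star A q2 y = q1.

(* A (regular) language satisfies the partial order condition if its minimal
   DFA does (minimal DFAs are unique up to isomorphism; we require it of
   every minimal DFA). *)
Definition lang_poc (Sigma : finType) (L : language Sigma) : Prop :=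
  regular L /\ forall A : dfa Sigma, minimal_dfa A L -> dfa_poc A.

Definition lang_inter (Sigma : finType) (L1 L2 : language Sigma) : language Sigma :=
  fun w => L1 w /\ L2 w.

(* Main.v *)
Require Import Defs.
From mathcomp Require Import all_boot.
From mathcomp Require Import zify.
From Stdlib Require Import Classical ClassicalEpsilon.

Set Implicit Arguments. Unset Strict Implicit. Unset Printing Implicit Defensive.

Section Aux.
Variable Sigma : finType.

Definition wpow (w : seq Sigma) n := iter n (cat w) [::].

Lemma ds_cat (A : dfa Sigma) q w1 w2 :
  delta_star A q (w1 ++ w2) = delta_star A (delta_star A q w1) w2.
Proof. exact: foldl_cat. Qed.

Lemma ds_wpow (A : dfa Sigma) q w n :
  delta_star A q (wpow w n) = iter n (fun p => delta_star A p w) q.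
Proof.
elim: n q => [|n IH] q //=.
by rewrite /wpow /= -/(wpow w n) ds_cat IH -iterSr.
Qed.

Lemma idem_iter (T : finType) (f : T -> T) :
  exists n, 0 < n /\ forall t, iter n f (iter n f t) = iter n f t.
Proof.
have key : forall a b, a < b -> (forall t, iter a f t = iter b f t) ->
   exists n, 0 < n /\ forall t, iter n f (iter n f t) = iter n f t.
  move=> a b ab E.
  have K : forall k t, iter (k * (b - a) + a) f t = iter a f t.
    elim=> [|k IH] t //.
    have -> : k.+1 * (b - a) + a = k * (b - a) + b by rewrite mulSn; lia.
    by rewrite iterD -E -iterD IH.
  have K2 : forall m k t, a <= m -> iter (m + k * (b - a)) f t = iter m f t.
    move=> m k t am.
    have -> : m + k * (b - a) = (m - a) + (k * (b - a) + a) by lia.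
    by rewrite iterD K -iterD subnK.
  exists (a.+1 * (b - a)); split; first by rewrite muln_gt0 subn_gt0 ab.
  move=> t; rewrite -iterD K2 //.
  have : 0 < b - a by rewrite subn_gt0.
  rewrite mulSn; nia.
pose h := fun i : 'I_(#|{ffun T -> T}|.+1) => [ffun t => iter i f t].
have : ~ injective h.
  by move=> /leq_card; rewrite card_ord ltnn.
rewrite /injective => Hn.
have [i Hi] := not_all_ex_not _ _ Hn.
have [j Hj] := not_all_ex_not _ _ Hi.
have [hij nij] := imply_to_and _ _ Hj.
have E : forall t, iter i f t = iter j f t.
  by move=> t; move: (congr1 (fun g : {ffun T -> T} => g t) hij); rewrite /h !ffunE.
case: (ltngtP i j) => c.
- exact: (key _ _ c).
- by apply: (key _ _ c) => t; rewrite E.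
- by case: nij; apply: val_inj.
Qed.

Lemma idem_word (A : dfa Sigma) w :
  exists n, 0 < n /\ forall p,
    delta_star A (delta_star A p (wpow w n)) (wpow w n) = delta_star A p (wpow w n).
Proof.
have [n [n0 H]] := idem_iter (fun p => delta_star A p w).
by exists n; split => // p; rewrite !ds_wpow.
Qed.


Definition reachP (A : dfa Sigma) (q : state A) := exists u, delta_star A (start A) u = q.
Definition reachb (A : dfa Sigma) (q : state A) : bool :=
  if excluded_middle_informative (@reachP A q) then true else false.
Lemma reachbP (A : dfa Sigma) (q : state A) : reachb q <-> reachP q.
Proof. by rewrite /reachb; case: excluded_middle_informative. Qed.

Lemma reach_delta (A : dfa Sigma) (q : state A) a : reachb q -> reachb (delta A q a).
Proof.
move=> /reachbP [u hu]; apply/reachbP; exists (rcons u a).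
by rewrite /delta_star foldl_rcons -/(delta_star A _ u) hu.
Qed.

Lemma reach_start (A : dfa Sigma) : reachb (start A).
Proof. by apply/reachbP; exists [::]. Qed.

Definition subdfa (A : dfa Sigma) : dfa Sigma :=
  @Dfa Sigma {q : state A | reachb q}
    (fun q a => exist _ (delta A (val q) a) (reach_delta a (valP q)))
    (exist _ (start A) (reach_start A))
    [set q : {q : state A | reachb q} | val q \in final A].

Lemma subdfa_ds (A : dfa Sigma) q w :
  val (delta_star (subdfa A) q w) = delta_star A (val q) w.
Proof. by elim: w q => [|a w IH] q //=; rewrite /delta_star /= -!/(delta_star _ _ _) IH. Qed.

Lemma minimal_reach (A : dfa Sigma) L : minimal_dfa A L -> forall q : state A, reachP q.
Proof.
move=> [rec mn] q; apply: NNPP => nq.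
have rB : recognizes (subdfa A) L.
  move=> w; rewrite rec /accepts inE subdfa_ds //.
have := mn _ rB; rewrite card_sig.
rewrite -(cardC (fun q : state A => reachb q)).
have : 0 < #|[predC (fun q : state A => reachb q)]|.
  apply/card_gt0P; exists q; rewrite inE /=; apply/negP => /reachbP //.
move=> p; rewrite -[X in _ <= X]addn0.
have -> : #|[pred x | @reachb A x]| = #|(fun q : state A => reachb q)| by apply: eq_card.
by rewrite leq_add2l leqNgt p.
Qed.


Lemma ex_minimal (L : language Sigma) : regular L -> exists A, minimal_dfa A L.
Proof.
move=> [B rB].
suff : forall n (B : dfa Sigma), #|state B| <= n -> recognizes B L ->
  exists A, minimal_dfa A L by move/(_ _ B (leqnn _) rB).
elim=> [|n IH] B' le rB'.
  exists B'; split => // C _; by apply: leq_trans le _.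
case: (classic (forall C : dfa Sigma, recognizes C L -> #|state B'| <= #|state C|)).
  by move=> H; exists B'.
move=> Hn; have [C HC] := not_all_ex_not _ _ Hn.
have [rC /negP] := imply_to_and _ _ HC; rewrite -ltnNge => lt.
by apply: (IH C) => //; rewrite -ltnS (leq_trans lt le).
Qed.

Definition prodA (A1 A2 : dfa Sigma) : dfa Sigma :=
  @Dfa Sigma (state A1 * state A2)%type
    (fun p a => (delta A1 p.1 a, delta A2 p.2 a)) (start A1, start A2)
    [set p : (state A1 * state A2)%type | (p.1 \in final A1) && (p.2 \in final A2)].

Lemma prodA_ds (A1 A2 : dfa Sigma) p w :
  delta_star (prodA A1 A2) p w = (delta_star A1 p.1 w, delta_star A2 p.2 w).
Proof. by elim: w p => [|a w IH] [p1 p2] //=; rewrite /delta_star /= -!/(delta_star _ _ _) IH. Qed.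

Definition accb (A : dfa Sigma) w := delta_star A (start A) w \in final A.

Lemma accb_inter (A A1 A2 : dfa Sigma) L1 L2 :
  recognizes A (lang_inter L1 L2) -> recognizes A1 L1 -> recognizes A2 L2 ->
  forall w, accb A w = accb A1 w && accb A2 w.
Proof.
move=> r r1 r2 w; apply/idP/andP.
  by move/r => [/r1 h1 /r2 h2].
by move=> [h1 h2]; apply/r; split; [apply/r1|apply/r2].
Qed.

Lemma wpow_ne (w : seq Sigma) n : w != [::] -> 0 < n -> wpow w n != [::].
Proof. by case: n => // n; case: w. Qed.

End Aux.

Theorem lemma4p5 (Sigma : finType) (L' L'' : language Sigma) :
  lang_poc L' -> lang_poc L'' -> lang_poc (lang_inter L' L'').
Proof.
move=> [reg1 poc1] [reg2 poc2].
have [A1 m1] := ex_minimal reg1.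
have [A2 m2] := ex_minimal reg2.
have p1 := poc1 _ m1. have p2 := poc2 _ m2.
have r1 := m1.1. have r2 := m2.1.
split.
  exists (prodA A1 A2) => w; rewrite /accepts prodA_ds inE /=.
  split; first by move=> [/r1 h1 /r2 h2]; rewrite h1 h2.
  by move=> /andP [h1 h2]; split; [apply/r1|apply/r2].
move=> A mA; have rA := mA.1.
move=> [q1 [q2 [x [y [[z dz] [xn [yn [e1 [e2 e3]]]]]]]]].
have [u hu] := minimal_reach mA q1.
set P := prodA A1 A2.
have [n [n0 In]] := idem_word P x.
set X := wpow x n.
set g := X ++ y.
have [m [m0 Im]] := idem_word P g.
case: m m0 Im => // m' _ Im.
set G := wpow g m'.+1.
set pp1 := delta_star P (start P) (u ++ G).
set pp2 := delta_star P pp1 X.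
set Y := y ++ wpow g m'.
have h1 : delta_star P pp2 X = pp2 by rewrite /pp2 In.
have h2 : delta_star P pp2 Y = pp1.
  rewrite /pp2 -ds_cat catA -/g.
  have -> : (g ++ wpow g m') = G by [].
  by rewrite /pp1 ds_cat Im.
have Xn : X != [::] by apply: wpow_ne.
have Yn : Y != [::] by rewrite /Y; case: (y) yn.
have q2x : forall j, delta_star A q2 (wpow x j) = q2.
  by elim=> [|j IH] //; rewrite /wpow /= -/(wpow x j) ds_cat e2.
have q1X : delta_star A q1 X = q2.
  have q1x : forall j, delta_star A q1 (wpow x j.+1) = q2.
    by move=> j; rewrite /wpow /= -/(wpow x j) ds_cat e1 q2x.
  by rewrite /X -(prednK n0) q1x.
have q1g : forall j, delta_star A q1 (wpow g j) = q1.
  elim=> [|j IH] //; rewrite /wpow /= -/(wpow g j) ds_cat.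
  by rewrite /g ds_cat q1X e3.
set w1 := u ++ G ++ z.
set w2 := u ++ G ++ X ++ z.
have a1 : delta_star A (start A) w1 = delta_star A q1 z.
  by rewrite /w1 ds_cat hu ds_cat /G q1g.
have a2 : delta_star A (start A) w2 = delta_star A q2 z.
  by rewrite /w2 ds_cat hu ds_cat /G q1g ds_cat q1X.
have ne : accb A w1 != accb A w2 by rewrite /accb a1 a2.
rewrite !(accb_inter rA r1 r2) in ne.
have P1 : forall w, delta_star A1 (start A1) (u ++ G ++ w) = delta_star A1 pp1.1 w.
  by move=> w; rewrite /pp1 prodA_ds /= catA ds_cat.
have P2 : forall w, delta_star A2 (start A2) (u ++ G ++ w) = delta_star A2 pp1.2 w.
  by move=> w; rewrite /pp1 prodA_ds /= catA ds_cat.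
case E1 : (accb A1 w1 == accb A1 w2).
  case E2 : (accb A2 w1 == accb A2 w2).
    by move: ne; rewrite (eqP E1) (eqP E2) eqxx.
  apply: p2; exists pp1.2, pp2.2, X, Y; split; last first.
    split=> //; split=> //; split; first by rewrite /pp2 prodA_ds.
    split; first by move: (congr1 snd h1); rewrite prodA_ds.
    by move: (congr1 snd h2); rewrite prodA_ds.
  exists z; move: E2; rewrite /accb /w2 catA -catA P2 /w1 P2 /pp2 prodA_ds /= ds_cat.
  by move/negbT.
apply: p1; exists pp1.1, pp2.1, X, Y; split; last first.
  split=> //; split=> //; split; first by rewrite /pp2 prodA_ds.
  split; first by move: (congr1 fst h1); rewrite prodA_ds.
  by move: (congr1 fst h2); rewrite prodA_ds.
exists z; move: E1; rewrite /accb /w2 catA -catA P1 /w1 P1 /pp2 prodA_ds /= ds_cat.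
by move/negbT.
Qed.
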